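(* Let $d\ge2$ and, for $\ell\ge0$, let $P_\ell:[-1,1]\to\mathbb R$ be the Legendre polynomial of degree $\ell$ in dimension $d$, normalized by $P_\ell(1)=1$. Let $\lambda_\ell=\ell(d+\ell-2)$. Then for all $x\in[-1,1]$ and all integers $\ell\ge1$, \[ 1-P_{2\ell}(x)\le\frac{\lambda_{2\ell}}{\lambda_2}\big(1-P_2(x)\big). \]
   Context: The Legendre polynomial $P_\ell$ in dimension $d$ is the polynomial such that $\sigma\mapsto P_\ell(e_1\cdot\sigma)$ is the unique spherical harmonic of degree $\ell$ on $S^{d-1}$ (restriction of an $\ell$-homogeneous harmonic polynomial on $\mathbb R^d$) invariant under rotations fixing $e_1$ with value $1$ at $e_1$; for $d=2$, $P_\ell(\cos\theta)=\cos(\ell\theta)$. Then $-\Delta_{S^{d-1}}Y=\lambda_\ell Y$ for $Y(\sigma)=P_\ell(e_1\cdot\sigma)$. *)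

(* Defs.v *)
From mathcomp Require Import all_boot all_order all_algebra.
From mathcomp Require Import reals.
Set Implicit Arguments. Unset Strict Implicit. Unset Printing Implicit Defensive.
Import Order.TTheory GRing.Theory Num.Theory.
Local Open Scope ring_scope.

(* Legendre polynomials in dimension d (normalized by P_l(1) = 1), given by
   the standard three-term recurrence (l >= 1):
     (l + d - 2) P_{l+1} = (2 l + d - 2) X P_l - l P_{l-1},
   with P_0 = 1, P_1 = X.  For d = 2 this gives the Chebyshev polynomials
   P_l(cos t) = cos(l t); for d = 3 the classical Legendre polynomials. *)

Section Legendre.
Variable R : realType.

(* leg_pair d n = (P_n, P_{n+1}) *)
Fixpoint leg_pair (d n : nat) : {poly R} * {poly R} :=
  match n with
  | 0%N => (1, 'X)
  | n'.+1 =>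
      let p := leg_pair d n' in
      (p.2, ((n' + d - 1)%:R)^-1 *:
              (((2 * n' + d)%:R) *: ('X * p.2) - (n'.+1)%:R *: p.1))
  end.

Definition legendre (d l : nat) : {poly R} := (leg_pair d l).1.

Definition leg_lambda (d l : nat) : R := (l * (d + l - 2))%:R.

End Legendre.

(* Main.v *)
Require Import Defs.
From mathcomp Require Import all_boot all_order all_algebra.
From mathcomp Require Import reals.
From mathcomp Require Import polyrcf ring lra zify.
Import Order.TTheory GRing.Theory Num.Theory.
Local Open Scope ring_scope.

Section Leg.
Variable R : realType.
Variable k : nat.
Local Notation P n := (legendre R k.+2 n).

Lemma P0 : P 0 = 1. Proof. by []. Qed.
Lemma P1 : P 1 = 'X. Proof. by []. Qed.

Lemma Prec n : (n + k + 1)%:R * P n.+2 =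
  (2 * n + k + 2)%:R * ('X * P n.+1) - (n + 1)%:R * P n.
Proof.
rewrite /legendre.
change (leg_pair R k.+2 n.+2).1 with (leg_pair R k.+2 n.+1).2.
rewrite [(leg_pair R k.+2 n.+1).2]/=.
change (leg_pair R k.+2 n.+1).1 with (leg_pair R k.+2 n).2.
have -> : (n + k.+2 - 1 = n + k + 1)%N by lia.
have -> : (2 * n + k.+2 = 2 * n + k + 2)%N by lia.
rewrite -polyC_natr mul_polyC scalerA mulfV ?scale1r; last first.
  by rewrite addn1 pnatr_eq0.
by rewrite !scaler_nat !mulr_natl addn1.
Qed.

Lemma nat_poly_neq0 (m : nat) : (0 < m)%N -> (m%:R : {poly R}) != 0.
Proof. by move=> hm; rewrite -polyC_natr polyC_eq0 pnatr_eq0 -lt0n. Qed.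

Lemma one_subX2_neq0 : (1 - 'X^2 : {poly R}) != 0.
Proof.
apply/negP => /eqP h; have := congr1 (fun p => p.[0]) h.
by rewrite /= !hornerE expr0n /= subr0 => /eqP; rewrite oner_eq0.
Qed.

Lemma cancel_lin (c : {poly R}) (x y : {poly R}) : c != 0 -> c * x = c * y -> x = y.
Proof. by move=> hc; apply: mulfI. Qed.

Lemma der_gen (a b c : nat) (p0 p1 p2 : {poly R}) :
  c%:R * p2 = a%:R * ('X * p1) - b%:R * p0 ->
  c%:R * p2^`() = a%:R * (p1 + 'X * p1^`()) - b%:R * p0^`().
Proof.
move=> h; have := congr1 deriv h.
rewrite !mulr_natl !derivE mul1r => ->.
by rewrite ?mulr_natl.
Qed.

Lemma derPrec m : (m + k + 1)%:R * (P m.+2)^`() =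
   (2 * m + k + 2)%:R * (P m.+1 + 'X * (P m.+1)^`()) - (m + 1)%:R * (P m)^`().
Proof. exact: der_gen (Prec m). Qed.

Lemma AB m :
  (1 - 'X^2) * (P m.+1)^`() = (m + 1)%:R * (P m - 'X * P m.+1) /\
  (1 - 'X^2) * (P m)^`() = (m + k)%:R * ('X * P m - P m.+1).
Proof.
elim: m => [|m [IHA IHB]].
  rewrite P0 P1 derivX derivC; split; first by ring.
  by rewrite mulr0 mulr1 subrr mulr0.
have hr := Prec m.
have hd := derPrec m.
move: IHA IHB hr hd.
move: (P m) (P m.+1) (P m.+2) => p0 p1 p2 IHA IHB hr hd.
split.
  apply: (@cancel_lin ((m + k + 1)%:R)); first by apply: nat_poly_neq0; lia.
  have -> : (m + k + 1)%:R * ((1 - 'X^2) * p2^`()) =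
    (1 - 'X^2) * ((m + k + 1)%:R * p2^`()) by ring.
  rewrite hd.
  have -> : (1 - 'X^2) * ((2 * m + k + 2)%:R * (p1 + 'X * p1^`()) -
     (m + 1)%:R * p0^`()) =
     (2 * m + k + 2)%:R * ((1 - 'X^2) * p1 + 'X * ((1 - 'X^2) * p1^`()))
     - (m + 1)%:R * ((1 - 'X^2) * p0^`()) by ring.
  rewrite IHA IHB.
  have -> : (m + k + 1)%:R * ((m.+1 + 1)%:R * (p1 - 'X * p2)) =
    (m.+1 + 1)%:R * ((m + k + 1)%:R * p1 - 'X * ((m + k + 1)%:R * p2)) by ring.
  rewrite hr; ring.
rewrite IHA.
have -> : (m.+1 + k)%:R * ('X * p1 - p2) =
  (m.+1 + k)%:R * ('X * p1) - (m + k + 1)%:R * p2 by ring.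
rewrite hr; ring.
Qed.

Lemma ODE n : (1 - 'X^2) * (P n)^`()^`() - (k + 1)%:R * ('X * (P n)^`())
   + (n * (n + k))%:R * P n = 0.
Proof.
case: n => [|m]; first by rewrite P0 !derivC; ring.
have [hA hB] := AB m.
move: hA hB; move: (P m) (P m.+1) => p0 p1 hA hB.
have hDA : -(2%:R * 'X * p1^`()) + (1 - 'X^2) * p1^`()^`() =
   (m + 1)%:R * (p0^`() - p1 - 'X * p1^`()).
  have e1 : -(2%:R * 'X * p1^`()) + (1 - 'X^2) * p1^`()^`() =
      ((1 - 'X^2) * p1^`())^`().
    by rewrite !derivE /=; ring.
  have e2 : (m + 1)%:R * (p0^`() - p1 - 'X * p1^`()) =
      ((m + 1)%:R * (p0 - 'X * p1))^`().
    by rewrite !mulr_natl !derivE /=; ring.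
  by rewrite e1 e2 hA.
apply: (@cancel_lin (1 - 'X^2)); first exact: one_subX2_neq0.
have -> : (1 - 'X^2) * ((1 - 'X^2) * p1^`()^`() - (k + 1)%:R * ('X * p1^`()) +
    (m.+1 * (m.+1 + k))%:R * p1) =
  (1 - 'X^2) * ((-(2%:R * 'X * p1^`()) + (1 - 'X^2) * p1^`()^`()) -
      (m + 1)%:R * (p0^`() - p1 - 'X * p1^`()))
  + (m + 1)%:R * ((1 - 'X^2) * p0^`() - (m + k)%:R * ('X * p0 - p1))
  - (m + k)%:R * 'X * ((1 - 'X^2) * p1^`() - (m + 1)%:R * (p0 - 'X * p1)) by ring.
by rewrite hDA hA hB !subrr; ring.
Qed.

Lemma ODE1 n : (1 - 'X^2) * (P n)^`()^`()^`() - (k + 3)%:R * ('X * (P n)^`()^`())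
   + (n * (n + k))%:R * (P n)^`() - (k + 1)%:R * (P n)^`() = 0.
Proof.
have := ODE n; move: (P n) => p h.
have e : (1 - 'X^2) * p^`()^`()^`() - (k + 3)%:R * ('X * p^`()^`())
   + (n * (n + k))%:R * p^`() - (k + 1)%:R * p^`() =
   ((1 - 'X^2) * p^`()^`() - (k + 1)%:R * ('X * p^`()) + (n * (n + k))%:R * p)^`().
  rewrite !mulr_natl !derivE /=; ring.
by rewrite e h derivC.
Qed.

Lemma Prec_h n x : (n + k + 1)%:R * (P n.+2).[x] =
  (2 * n + k + 2)%:R * (x * (P n.+1).[x]) - (n + 1)%:R * (P n).[x].
Proof.
have := congr1 (horner^~ x) (Prec n); move: (P n) (P n.+1) (P n.+2) => p0 p1 p2.
by cbv beta; rewrite !mulr_natl !(hornerE, hornerMn, hornerM, hornerX).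
Qed.

Lemma derPrec_h n x : (n + k + 1)%:R * (P n.+2)^`().[x] =
  (2 * n + k + 2)%:R * ((P n.+1).[x] + x * (P n.+1)^`().[x]) - (n + 1)%:R * (P n)^`().[x].
Proof.
have := congr1 (horner^~ x) (derPrec n); move: (P n) (P n.+1) (P n.+2) => p0 p1 p2.
by cbv beta; rewrite !mulr_natl !(hornerE, hornerMn, hornerM, hornerX).
Qed.

Lemma ODE_h n x : (1 - x^+2) * (P n)^`()^`().[x] - (k + 1)%:R * (x * (P n)^`().[x])
   + (n * (n + k))%:R * (P n).[x] = 0.
Proof.
have := congr1 (horner^~ x) (ODE n); move: (P n) => p.
by cbv beta; rewrite !mulr_natl !(hornerE, hornerMn, hornerM, hornerX).
Qed.

Lemma ODE1_h n x : (1 - x^+2) * (P n)^`()^`()^`().[x] - (k + 3)%:R * (x * (P n)^`()^`().[x])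
   + (n * (n + k))%:R * (P n)^`().[x] - (k + 1)%:R * (P n)^`().[x] = 0.
Proof.
have := congr1 (horner^~ x) (ODE1 n); move: (P n) => p.
by cbv beta; rewrite !mulr_natl !(hornerE, hornerMn, hornerM, hornerX).
Qed.

Lemma natR_neq0 (m : nat) : (0 < m)%N -> (m%:R : R) != 0.
Proof. by move=> hm; rewrite pnatr_eq0 -lt0n. Qed.

Lemma Pone2 n : (P n).[1] = 1 /\ (P n.+1).[1] = 1.
Proof.
elim: n => [|n [IH1 IH2]]; first by rewrite P0 P1 !hornerE.
split => //.
apply: (@mulfI _ ((n + k + 1)%:R)); first by apply: natR_neq0; lia.
rewrite Prec_h IH1 IH2; ring.
Qed.

Lemma Pone n : (P n).[1] = 1.
Proof. by case: (Pone2 n). Qed.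

Lemma Peven2 n : (forall x, (P n).[-x] = (-1)^+n * (P n).[x]) /\
                 (forall x, (P n.+1).[-x] = (-1)^+n.+1 * (P n.+1).[x]).
Proof.
elim: n => [|n [IH1 IH2]].
  by rewrite P0 P1; split => x; rewrite !hornerE; ring.
split => // x.
apply: (@mulfI _ ((n + k + 1)%:R)); first by apply: natR_neq0; lia.
rewrite Prec_h IH1 IH2.
have -> : (n + k + 1)%:R * ((-1) ^+ n.+2 * (P n.+2).[x]) =
   (-1) ^+ n.+2 * ((n + k + 1)%:R * (P n.+2).[x]) by ring.
rewrite Prec_h !exprS; ring.
Qed.

Lemma Peven l x : (P l.*2).[-x] = (P l.*2).[x].
Proof.
case: (Peven2 l.*2) => h _; rewrite h.
have -> : (-1 : R) ^+ l.*2 = 1 by rewrite -mul2n exprM sqrrN !expr1n.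
by rewrite mul1r.
Qed.

Lemma Pzero j : (P j.*2.+1).[0] = 0 /\ (P j.*2)^`().[0] = 0.
Proof.
elim: j => [|j [IH1 IH2]].
  by rewrite /= P0 P1 derivC !hornerE.
have hA : (P (j.+1).*2.+1).[0] = 0.
  change ((P (j.*2.+1).+2).[0] = 0).
  apply: (@mulfI _ ((j.*2.+1 + k + 1)%:R)); first by apply: natR_neq0; lia.
  by rewrite Prec_h IH1; ring.
split => //.
change ((P (j.*2).+2)^`().[0] = 0).
apply: (@mulfI _ ((j.*2 + k + 1)%:R)); first by apply: natR_neq0; lia.
by rewrite derPrec_h IH1 IH2; ring.
Qed.

Lemma Pbound j : ((k + 1)%:R * (P j.*2.+2).[0])^+2 <= 1.
Proof.
elim: j => [|j IH].
  have : (0 + k + 1)%:R * (P 2).[0] = -1.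
    by rewrite Prec_h P0 P1 hornerX hornerC; ring.
  by rewrite add0n /= => ->; rewrite sqrrN expr1n.
change (P (j.+1).*2.+2) with (P (j.*2.+2).+2).
have h := Prec_h (j.*2.+2) 0.
move: IH h; move: (P j.*2.+2).[0] (P (j.*2.+2).+2).[0] => t s IH h.
rewrite mul0r mulr0 sub0r in h.
have ha : (0 : R) < (j.*2.+2 + k + 1)%:R by rewrite ltr0n; lia.
have hb : (0 : R) <= (j.*2.+2 + 1)%:R by rewrite ler0n.
have hab : ((j.*2.+2 + 1)%:R : R) <= (j.*2.+2 + k + 1)%:R by rewrite ler_nat; lia.
move: ha hb hab h.
move: ((j.*2.+2 + k + 1)%:R : R) ((j.*2.+2 + 1)%:R : R) => a b ha hb hab h.
move: IH; move: ((k + 1)%:R : R) => c IH.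
have e : a * (c * s) = - (b * (c * t)) by rewrite mulrCA h; ring.
move: e IH; move: (c * s) (c * t) => u w e IH.
have e2 : a ^+ 2 * u ^+ 2 = b ^+ 2 * w ^+ 2.
  by rewrite -!exprMn e sqrrN.
have : a ^+ 2 * u ^+ 2 <= a ^+ 2 * 1.
  rewrite e2 mulr1 (le_trans (y := b ^+ 2 * 1)) //.
    by rewrite ler_wpM2l // sqr_ge0.
  by rewrite mulr1 ler_sqr ?nnegrE ?(ltW ha).
by rewrite ler_pM2l // exprn_gt0.
Qed.

Lemma eq_lc (a b c e : R) : e = 0 -> a - b = c * e -> a = b.
Proof. by move=> -> h; apply/eqP; rewrite -subr_eq0 h mulr0. Qed.

Ltac hsimp := rewrite ?(hornerD, hornerN, hornerM, hornerX, hornerC, hornerXn,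
  hornerMn, horner_exp, horner0).

Lemma Vbound l (V : {poly R}) x : (2 <= l)%N ->
  (P l.*2)^`() = V * 'X -> 0 <= x <= 1 ->
  V.[x] <= (l.*2 * (l.*2 + k))%:R / (k + 1)%:R.
Proof.
move=> hl hV /andP[hx0 hx1].
have hP1 y : (P l.*2)^`().[y] = V.[y] * y by rewrite hV; hsimp.
have hP2 y : (P l.*2)^`()^`().[y] = V^`().[y] * y + V.[y].
  by rewrite hV !derivE; hsimp; rewrite mulr1.
have hP3 y : (P l.*2)^`()^`()^`().[y] = V^`()^`().[y] * y + 2%:R * V^`().[y].
  rewrite hV !derivE; hsimp; rewrite mulr1; ring.
move: (ODE1_h l.*2) (ODE_h l.*2) (Pbound l.-1) (Pone l.*2).
have e2 : forall m, (1 < m)%N -> (m.-1).*2.+2 = m.*2 by move=> [|[|m]] hm.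
rewrite (e2 l hl).
move: hP1 hP2 hP3; move: (P l.*2) => p hP1 hP2 hP3 hE hO hB h1.
have {}hE y : (1 - y^+2) * (V^`()^`().[y] * y + 2%:R * V^`().[y])
   - (k + 3)%:R * (y * (V^`().[y] * y + V.[y]))
   + (l.*2 * (l.*2 + k))%:R * (V.[y] * y) - (k + 1)%:R * (V.[y] * y) = 0.
  by rewrite -hP3 -hP2 -hP1.
have {}hO y : (1 - y^+2) * (V^`().[y] * y + V.[y]) - (k + 1)%:R * (y * (V.[y] * y))
   + (l.*2 * (l.*2 + k))%:R * p.[y] = 0.
  by rewrite -hP2 -hP1.
have hnu : (2 * k + 4 < l.*2 * (l.*2 + k))%N.
  rewrite -mul2n; nia.
move: hE hO hnu; move: (l.*2 * (l.*2 + k))%N => lamn hE hO hnu.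
have hV0' : V^`().[0] = 0.
  have : 2%:R * V^`().[0] = 0 by apply: (@eq_lc _ _ 1 _ (hE 0)); ring.
  by move/eqP; rewrite mulf_eq0 pnatr_eq0 /= => /eqP.
have hV0 : V.[0] = - (lamn%:R * p.[0]).
  by apply: (@eq_lc _ _ 1 _ (hO 0)); ring.
have hV1 : (k + 1)%:R * V.[1] = lamn%:R.
  by apply: (@eq_lc _ _ (-1) _ (hO 1)); rewrite h1; ring.
pose nu : R := lamn%:R - (2 * k + 4)%:R.
have hnu0 : 0 < nu by rewrite /nu subr_gt0 ltr_nat.
pose S := nu%:P * (V * V) + (1 - 'X^2) * (V^`() * V^`()).
have hS y : S.[y] = nu * (V.[y] * V.[y]) + (1 - y^+2) * (V^`().[y] * V^`().[y]).
  by rewrite /S; hsimp.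
have hSd y : S^`().[y] = nu * (2%:R * V.[y] * V^`().[y]) - 2%:R * y * (V^`().[y] * V^`().[y])
   + (1 - y^+2) * (2%:R * V^`().[y] * V^`()^`().[y]).
  rewrite /S !derivE; hsimp; ring.
have hSx y : y * S^`().[y] = - (2%:R * (V^`().[y] * V^`().[y]) * (2%:R - (k + 4)%:R * y^+2)).
  rewrite hSd; apply: (@eq_lc _ _ (2%:R * V^`().[y]) _ (hE y)); rewrite /nu; ring.
have sq0 (w : R) : 0 <= w * w by rewrite -expr2 sqr_ge0.
have hx2 : x ^+ 2 <= 1 by rewrite exprn_ile1.
have key : nu * (V.[x] * V.[x]) <= S.[x].
  by rewrite hS lerDl mulr_ge0 // subr_ge0.
have ha : (0 : R) < (k + 1)%:R by rewrite ltr0n addn1.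
move: ha hV1 hB hSx hSd hS; move: ((k + 1)%:R : R) => a ha hV1 hB hSx hSd hS.
have ha2 : 0 <= a * a by [].
have hL : 0 <= (lamn%:R : R) by rewrite ler0n.
move: hL hV1 hV0 hnu0 key; move: (lamn%:R : R) => L hL hV1 hV0 hnu0 key.
have hSb : a * a * S.[x] <= nu * (L * L).
  have [hsm|hbig] := lerP ((k + 4)%:R * x ^+ 2) 2%:R.
    have mono := @ler_hornerW _ 0 x (- S).
    have : (- S).[0] <= (- S).[x].
      apply: mono; rewrite ?in_itv /= ?lexx ?hx0 //.
      move=> y; rewrite in_itv /= => /andP[y0 yx].
      rewrite derivN hornerN oppr_ge0 -(pmulr_rle0 _ y0) hSx oppr_le0.
      apply: mulr_ge0; first by rewrite mulr_ge0.
      rewrite subr_ge0 (le_trans _ hsm) // ler_wpM2l // ler_sqr ?nnegrE ?(ltW y0) ?(ltW yx) //.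
    rewrite !hornerN lerN2 => hle.
    rewrite (le_trans (ler_wpM2l ha2 hle)) // hS hV0' hV0 !mulr0 addr0.
    have : (a * p.[0]) * (a * p.[0]) <= 1 by rewrite -expr2.
    move=> hp; have := ler_wpM2l (mulr_ge0 (ltW hnu0) (sq0 L)) hp.
    by rewrite mulr1 => h; apply: le_trans h; rewrite le_eqVlt; apply/orP; left; apply/eqP; ring.
  have mono := @ler_hornerW _ x 1 S.
  have : S.[x] <= S.[1].
    apply: mono; rewrite ?in_itv /= ?lexx ?hx0 ?hx1 //.
    move=> y; rewrite in_itv /= => /andP[xy y1].
    have y0 : 0 < y by apply: le_lt_trans xy.
    rewrite -(pmulr_rge0 _ y0) hSx oppr_ge0.
    apply: mulr_ge0_le0; first by rewrite mulr_ge0.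
    rewrite subr_le0 (le_trans (ltW hbig)) // ler_wpM2l // ler_sqr ?nnegrE ?(ltW y0) ?(ltW xy) //.
  move=> hle; rewrite (le_trans (ler_wpM2l ha2 hle)) // hS expr1n subrr mul0r addr0.
  by rewrite le_eqVlt; apply/orP; left; apply/eqP; rewrite -hV1; ring.
have hv : (a * V.[x]) * (a * V.[x]) <= L * L.
  rewrite -(ler_pM2l hnu0).
  apply: le_trans hSb; rewrite (le_trans _ (ler_wpM2l ha2 key)) //.
  by rewrite le_eqVlt; apply/orP; left; apply/eqP; ring.
rewrite ler_pdivlMr // mulrC.
have [hneg|hpos] := lerP (a * V.[x]) 0; first exact: le_trans hneg hL.
by move: hv; rewrite -!expr2 ler_sqr ?nnegrE ?(ltW hpos).
Qed.

Lemma gpos l x : (2 <= l)%N -> 0 <= x <= 1 ->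
  0 <= (l.*2 * (l.*2 + k))%:R / (2 * (k + 1))%:R * (1 - x ^+ 2) - 1 + (P l.*2).[x].
Proof.
move=> hl hx.
have : root (P l.*2)^`() 0 by apply/rootP; case: (Pzero l).
case/factor_theorem => V hV; rewrite polyC0 subr0 in hV.
have hVb y := @Vbound l V y hl hV.
move: (Pone l.*2) hV hVb; move: (P l.*2) => p h1 hV hVb.
have ha : (0 : R) < (k + 1)%:R by rewrite ltr0n addn1.
have e2 : ((2 * (k + 1))%:R : R) = 2%:R * (k + 1)%:R by rewrite natrM.
rewrite e2.
move: hVb ha; move: ((l.*2 * (l.*2 + k))%:R : R) ((k + 1)%:R : R) => L a hVb ha.
pose c : R := L / (2%:R * a).
pose g := c%:P * (1 - 'X^2) - 1 + p.
have hg y : g.[y] = c * (1 - y ^+ 2) - 1 + p.[y] by rewrite /g; hsimp.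
have hgd y : g^`().[y] = y * (V.[y] - L / a).
  rewrite /g !derivE hV; hsimp; rewrite /c; field.
  by rewrite gt_eqF.
have mono := @ler_hornerW _ 0 1 (- g).
case/andP: hx => hx0 hx1.
have : (- g).[x] <= (- g).[1].
  apply: mono; rewrite ?in_itv /= ?lexx ?hx0 ?hx1 ?ler01 //.
  move=> y; rewrite in_itv /= => /andP[y0 y1].
  rewrite derivN hornerN oppr_ge0 hgd.
  rewrite pmulr_rle0 // subr_le0; apply: hVb.
  by rewrite (ltW y0) (ltW y1).
by rewrite !hornerN lerN2 !hg h1 expr1n subrr mulr0 sub0r addNr.
Qed.
End Leg.

Theorem proposition7p5 (R : realType) (d : nat) (hd : (2 <= d)%N)
  (l : nat) (hl : (1 <= l)%N) (x : R) (hx : -1 <= x <= 1) :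
  1 - (legendre R d (2 * l)).[x]
    <= leg_lambda R d (2 * l) / leg_lambda R d 2 * (1 - (legendre R d 2).[x]).
Proof.
case: d hd => [|[|k]] // _.
have hl2 : leg_lambda R k.+2 2 = (2 * (k + 2))%:R.
  by rewrite /leg_lambda; congr (_ %:R); lia.
have hl2n : (2 * (k + 2))%:R != 0 :> R by rewrite pnatr_eq0; lia.
case: l hl => [|[|l]] // _.
  by rewrite muln1 divff ?mul1r // hl2.
set m := l.+2.
have hlm : leg_lambda R k.+2 (2 * m) = (m.*2 * (m.*2 + k))%:R.
  by rewrite /leg_lambda; congr (_ %:R); rewrite -mul2n; lia.
rewrite hlm hl2 mul2n.
have hP2 : (k + 1)%:R * (legendre R k.+2 2).[x] = (k + 2)%:R * x ^+ 2 - 1.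
  have := Prec_h R k 0 x; rewrite add0n => ->.
  by rewrite P0 P1 hornerX hornerC; ring.
have ha : (k + 1)%:R != 0 :> R by rewrite pnatr_eq0 addn1.
have -> : (m.*2 * (m.*2 + k))%:R / (2 * (k + 2))%:R * (1 - (legendre R k.+2 2).[x])
   = (m.*2 * (m.*2 + k))%:R / (2 * (k + 1))%:R * (1 - x ^+ 2).
  apply: (mulfI ha); rewrite mulrCA mulrBr mulr1 hP2.
  rewrite !natrM; field.
  by apply/andP; split; apply: lt0r_neq0; have := ler0n R k; lra.
case/andP: hx => hxl hxu.
have [hx0|hx0] := lerP 0 x.
  have h := @gpos R k m x isT; rewrite hx0 hxu in h; have {}h := h isT.
  lra.
have h := @gpos R k m (-x) isT.
rewrite oppr_ge0 (ltW hx0) lerNl hxl Peven sqrrN in h; have {}h := h isT.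
lra.
Qed.
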